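(* Assume $g(k)\sim k^\alpha$ for some $\alpha\in(0,1]$. For $\varphi>0$ let $X$ have distribution $\mathcal P_\varphi$. Then for each $n\in\mathbb N$, $E[X^n]\sim\varphi^{n/\alpha}$ as $\varphi\to\infty$. Consequently $\ln Z(\varphi)\sim\alpha\varphi^{1/\alpha}$ and $\mathrm{Var}[X]=o(\varphi^{2/\alpha})$ as $\varphi\to\infty$.
   Context: $g:\mathbb N_0\to[0,\infty)$ with $g(n)=0$ iff $n=0$ (also Lipschitz and nondecreasing), $\lim_{k\to\infty}g(k)/k^\alpha=1$. $g(0)!=1$, $g(n)!=\prod_{i=1}^ng(i)$, $Z(\phi)=\sum_{n\ge0}\phi^n/g(n)!$, $\mathcal P_\phi(n)=\phi^n/(g(n)!Z(\phi))$. $a(\varphi)\sim b(\varphi)$ means $a/b\to1$. *)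

(* Defs.v *)
From Stdlib Require Import Reals.
From Coquelicot Require Import Coquelicot.
Open Scope R_scope.

Fixpoint gfact (g : nat -> R) (n : nat) : R :=
  match n with
  | O => 1
  | S m => gfact g m * g (S m)
  end.

Definition Zpart (g : nat -> R) (phi : R) : R :=
  Series (fun n => phi ^ n / gfact g n).

Definition Pphi (g : nat -> R) (phi : R) (n : nat) : R :=
  phi ^ n / (gfact g n * Zpart g phi).

Definition moment (g : nat -> R) (phi : R) (m : nat) : R :=
  Series (fun k => INR k ^ m * Pphi g phi k).

Definition variance (g : nat -> R) (phi : R) : R :=
  moment g phi 2 - (moment g phi 1) ^ 2.

Definition admissible_g (g : nat -> R) : Prop :=
  (forall n, 0 <= g n) /\
  (forall n, g n = 0 <-> n = O) /\
  (exists L, forall m n, Rabs (g m - g n) <= L * Rabs (INR m - INR n)) /\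
  (forall m n, (m <= n)%nat -> g m <= g n).

(* Main.v *)
Require Import Defs.
From Stdlib Require Import Reals Lra Lia.
From Coquelicot Require Import Coquelicot.
Open Scope R_scope.

Definition aa (g : nat -> R) (phi : R) (k : nat) := phi ^ k / gfact g k.

Lemma g_pos g : admissible_g g -> forall k, 0 < g (S k).
Proof.
  intros [H0 [H1 _]] k. destruct (H0 (S k)) as [h|h]; auto.
  symmetry in h. apply H1 in h. discriminate.
Qed.

Lemma g_mono g : admissible_g g -> forall m n, (m <= n)%nat -> g m <= g n.
Proof. intros [_ [_ [_ H]]]; auto. Qed.

Lemma gfact_pos g : admissible_g g -> forall k, 0 < gfact g k.
Proof.
  intros Hg k; induction k; simpl. lra.
  apply Rmult_lt_0_compat; auto. apply g_pos; auto.
Qed.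

Lemma Rpower_pos x y : 0 < Rpower x y.
Proof. unfold Rpower. apply exp_pos. Qed.

Lemma Rpower_inv_l x al : 0 < x -> 0 < al -> Rpower (Rpower x (1/al)) al = x.
Proof.
  intros. rewrite Rpower_mult. replace (1/al*al) with 1 by (field; lra).
  apply Rpower_1; auto.
Qed.

Lemma Rpower_inv_r x al : 0 < x -> 0 < al -> Rpower (Rpower x al) (1/al) = x.
Proof.
  intros. rewrite Rpower_mult. replace (al*(1/al)) with 1 by (field; lra).
  apply Rpower_1; auto.
Qed.

Lemma pow_alpha_infty al : 0 < al -> is_lim_seq (fun k => Rpower (INR k) al) p_infty.
Proof.
  intros Hal. apply is_lim_seq_spec. intros M.
  set (B := Rpower (Rabs M + 1) (1/al)).
  assert (HB : 0 < B) by apply Rpower_pos.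
  destruct (nfloor_ex B) as [N HN]; [lra|].
  exists (S N). intros k Hk.
  apply le_INR in Hk. rewrite S_INR in Hk.
  apply Rlt_le_trans with (Rpower B al).
  - unfold B. rewrite Rpower_inv_l; [| pose proof (Rabs_pos M); lra | auto].
    pose proof (Rle_abs M); lra.
  - apply Rle_Rpower_l; lra.
Qed.

Lemma g_infty g al : 0 < al ->
  is_lim_seq (fun k => g k / Rpower (INR k) al) 1 -> is_lim_seq g p_infty.
Proof.
  intros Hal Hl.
  eapply is_lim_seq_ext.
  2: { eapply is_lim_seq_mult. exact Hl. apply (pow_alpha_infty al Hal).
       apply is_Rbar_mult_sym, is_Rbar_mult_p_infty_pos. simpl; lra. }
  intros k. simpl. field. apply Rgt_not_eq, Rpower_pos.
Qed.

Lemma inv_n_lim : is_lim_seq (fun k => / (INR k + 1)) 0.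
Proof.
  replace (Finite 0) with (Rbar_inv p_infty) by reflexivity.
  apply is_lim_seq_inv. 2: discriminate.
  eapply is_lim_seq_plus. apply is_lim_seq_INR. apply is_lim_seq_const.
  constructor.
Qed.

Lemma ratio_lim_pow n : is_lim_seq (fun k => ((INR (S k) + 1) / (INR k + 1)) ^ n) 1.
Proof.
  assert (H : is_lim_seq (fun k => (INR (S k) + 1) / (INR k + 1)) 1).
  { assert (H0 := is_lim_seq_plus' (fun _ => 1) _ 1 0 (is_lim_seq_const 1) inv_n_lim).
    rewrite Rplus_0_r in H0.
    eapply is_lim_seq_ext. 2: exact H0.
    intros k. rewrite S_INR. field. pose proof (pos_INR k). lra. }
  induction n; simpl.
  - apply is_lim_seq_const.
  - assert (H1 := is_lim_seq_mult' _ _ _ _ H IHn). rewrite Rmult_1_r in H1. exact H1.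
Qed.

Lemma ex_series_ratio (c : nat -> R) l n : l < 1 -> (forall k, 0 < c k) ->
  is_lim_seq (fun k => c (S k) / c k) l ->
  ex_series (fun k => (INR k + 1) ^ n * c k).
Proof.
  intros Hl Hc Hr.
  apply ex_series_Rabs.
  apply ex_series_DAlembert with l; auto.
  - intros k. apply Rgt_not_eq. apply Rmult_lt_0_compat; auto.
    apply pow_lt. pose proof (pos_INR k); lra.
  - eapply is_lim_seq_ext.
    2: { replace l with (1 * l) by ring. apply is_lim_seq_mult'.
         apply (ratio_lim_pow n). exact Hr. }
    intros k. assert (0 < c k) by auto. assert (0 < c (S k)) by auto.
    assert (0 < INR k + 1) by (pose proof (pos_INR k); lra).
    assert (0 < INR (S k) + 1) by (pose proof (pos_INR (S k)); lra).
    rewrite Rabs_pos_eq.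
    + unfold Rdiv. rewrite Rpow_mult_distr. rewrite <- Rinv_pow by lra.
      field. repeat split; try lra; apply pow_nonzero; lra.
    + apply Rlt_le. apply Rdiv_lt_0_compat; apply Rmult_lt_0_compat; auto; apply pow_lt; lra.
Qed.

Lemma aa_S g phi k : aa g phi (S k) = aa g phi k * (phi / g (S k)).
Proof. unfold aa. simpl. unfold Rdiv. rewrite Rinv_mult. ring. Qed.

Lemma aa_pos g phi k : admissible_g g -> 0 < phi -> 0 < aa g phi k.
Proof. intros. unfold aa. apply Rdiv_lt_0_compat. apply pow_lt; auto. apply gfact_pos; auto. Qed.

Lemma aa_nonneg g phi k : admissible_g g -> 0 <= phi -> 0 <= aa g phi k.
Proof. intros. unfold aa. apply Rmult_le_pos. apply pow_le; auto. apply Rlt_le, Rinv_0_lt_compat, gfact_pos; auto. Qed.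

Lemma ex_series_moment g al phi n : admissible_g g -> 0 < al ->
  is_lim_seq (fun k => g k / Rpower (INR k) al) 1 -> 0 < phi ->
  ex_series (fun k => INR k ^ n * aa g phi k).
Proof.
  intros Hg Hal Hl Hphi.
  apply (@ex_series_le R_AbsRing R_CompleteNormedModule) with (fun k => (INR k + 1) ^ n * aa g phi k).
  - intros k. change norm with Rabs. rewrite Rabs_pos_eq.
    + apply Rmult_le_compat_r. apply aa_nonneg; auto; lra. apply pow_incr.
      pose proof (pos_INR k); lra.
    + apply Rmult_le_pos. apply pow_le, pos_INR. apply aa_nonneg; auto; lra.
  - apply ex_series_ratio with 0. lra. intros; apply aa_pos; auto.
    eapply is_lim_seq_ext.
    2:{ assert (H := g_infty g al Hal Hl). apply is_lim_seq_incr_1 in H.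
        apply is_lim_seq_inv in H. 2: discriminate.
        apply (is_lim_seq_scal_l _ phi) in H. simpl in H. rewrite Rmult_0_r in H. exact H. }
    intros k. simpl. rewrite aa_S. field. split.
    apply Rgt_not_eq, g_pos; auto. apply Rgt_not_eq, aa_pos; auto.
Qed.

Lemma Series_nonneg a : (forall n, 0 <= a n) -> ex_series a -> 0 <= Series a.
Proof.
  intros Ha He. replace 0 with (Series (fun n => 0 * a n)).
  - apply Series_le; auto. intros n; rewrite Rmult_0_l; split; auto; lra.
  - rewrite Series_scal_l. ring.
Qed.

Lemma partial_le_Series a N : (forall n, 0 <= a n) -> ex_series a -> sum_f_R0 a N <= Series a.
Proof.
  intros Ha He. rewrite (Series_incr_n a (S N)) by (auto; lia). simpl.
  assert (0 <= Series (fun k => a (S (N + k)))).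
  { apply Series_nonneg. auto. apply (ex_series_incr_n a (S N)) in He. exact He. }
  lra.
Qed.

Lemma term_le_Series a N : (forall n, 0 <= a n) -> ex_series a -> a N <= Series a.
Proof.
  intros Ha He. eapply Rle_trans. 2: apply (partial_le_Series a N); auto.
  destruct N. simpl; lra. simpl. assert (0 <= sum_f_R0 a N).
  { apply cond_pos_sum; auto. } lra.
Qed.

Lemma geom_up g phi m r : admissible_g g -> 0 < phi -> 0 <= r -> phi <= r * g (S m) ->
  forall j, aa g phi (m + j) <= aa g phi m * r ^ j.
Proof.
  intros Hg Hphi Hr Hm j. induction j.
  - rewrite Nat.add_0_r. simpl. lra.
  - rewrite Nat.add_succ_r, aa_S. simpl.
    assert (H1 : g (S m) <= g (S (m + j))) by (apply g_mono; auto; lia).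
    assert (H2 : 0 < g (S m)) by (apply g_pos; auto).
    assert (H3 : phi / g (S (m + j)) <= r).
    { apply Rmult_le_reg_r with (g (S (m+j))). lra. unfold Rdiv. rewrite Rmult_assoc, Rinv_l by lra.
      rewrite Rmult_1_r. apply Rle_trans with (r * g (S m)); auto. apply Rmult_le_compat_l; auto. }
    assert (0 <= phi / g (S (m + j))) by (apply Rlt_le, Rdiv_lt_0_compat; lra).
    assert (0 <= aa g phi (m + j)) by (apply aa_nonneg; auto; lra).
    replace (aa g phi m * (r * r ^ j)) with ((aa g phi m * r ^ j) * r) by ring.
    apply Rmult_le_compat; auto.
Qed.

Lemma geom_down g phi rho k : admissible_g g -> 0 < phi -> 0 < rho ->
  forall d, g (k + d)%nat <= rho * phi -> aa g phi k <= aa g phi (k + d) * rho ^ d.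
Proof.
  intros Hg Hphi Hr d. induction d; intros Hd.
  - rewrite Nat.add_0_r; simpl; lra.
  - rewrite Nat.add_succ_r in *. rewrite aa_S.
    assert (H1 : g (k + d)%nat <= g (S (k + d))) by (apply g_mono; auto).
    assert (H2 : 0 < g (S (k + d))) by (apply g_pos; auto).
    specialize (IHd ltac:(lra)).
    assert (0 < aa g phi (k + d)) by (apply aa_pos; auto).
    assert (H3 : aa g phi (k + d) <= rho * (aa g phi (k + d) * (phi / g (S (k + d))))).
    { unfold Rdiv. rewrite <- Rmult_assoc, <- Rmult_assoc.
      apply Rmult_le_reg_r with (g (S (k+d))). lra.
      rewrite Rmult_assoc, Rinv_l by lra. rewrite Rmult_1_r.
      replace (rho * aa g phi (k + d) * phi) with (aa g phi (k+d) * (rho * phi)) by ring.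
      apply Rmult_le_compat_l; lra. }
    simpl. eapply Rle_trans. apply IHd.
    replace (aa g phi (k + d) * (phi / g (S (k + d))) * (rho * rho ^ d)) with
      ((rho * (aa g phi (k + d) * (phi / g (S (k + d))))) * rho ^ d) by ring.
    apply Rmult_le_compat_r; auto. apply pow_le; lra.
Qed.

Lemma geom_rev_sum rho L : rho <> 1 ->
  sum_f_R0 (fun k => rho ^ (L - k)) L = (1 - rho ^ (S L)) / (1 - rho).
Proof.
  intros Hr. induction L.
  - simpl. field. lra.
  - rewrite decomp_sum by lia. simpl pred. rewrite Nat.sub_0_r.
    rewrite (sum_eq _ (fun k => rho ^ (L - k))).
    + rewrite IHL. simpl. field. lra.
    + intros i Hi. f_equal.
Qed.

Lemma lower_sum g phi rho L d : admissible_g g -> 0 < phi -> 0 < rho < 1 ->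
  g (L + S d)%nat <= rho * phi ->
  sum_f_R0 (aa g phi) L <= aa g phi (L + S d) * rho ^ (S d) / (1 - rho).
Proof.
  intros Hg Hphi Hr Hm.
  apply Rle_trans with (sum_f_R0 (fun k => aa g phi (L + S d) * rho ^ (S d) * rho ^ (L - k)) L).
  - apply sum_Rle. intros k Hk.
    replace (L + S d)%nat with (k + (L - k + S d))%nat in * by lia.
    eapply Rle_trans. apply (geom_down g phi rho k Hg Hphi ltac:(lra) (L - k + S d)); auto.
    rewrite Rmult_assoc, <- pow_add. replace (S d + (L - k))%nat with (L - k + S d)%nat by lia. lra.
  - rewrite (sum_eq _ (fun k => rho ^ (L - k) * (aa g phi (L + S d) * rho ^ (S d)))) by (intros; ring).
    rewrite <- scal_sum, geom_rev_sum by lra.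
    assert (0 < aa g phi (L + S d)) by (apply aa_pos; auto).
    assert (0 < rho ^ S d) by (apply pow_lt; lra).
    assert (0 < rho ^ S L) by (apply pow_lt; lra).
    set (c := aa g phi (L + S d) * rho ^ S d).
    assert (0 < c) by (apply Rmult_lt_0_compat; auto).
    replace (c * ((1 - rho ^ S L) / (1 - rho))) with ((c / (1 - rho)) * (1 - rho ^ S L)) by (field; lra).
    assert (0 < c / (1 - rho)) by (apply Rdiv_lt_0_compat; lra).
    set (q := c / (1 - rho)) in *. nra.
Qed.

Definition TT al phi := Rpower phi (1 / al).

Lemma TT_pos al phi : 0 < TT al phi.
Proof. apply Rpower_pos. Qed.

Lemma TT_pow al phi : 0 < phi -> 0 < al -> Rpower (TT al phi) al = phi.
Proof. intros; unfold TT; apply Rpower_inv_l; auto. Qed.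

Lemma TT_large al B : 0 < al -> exists Phi, 0 < Phi /\ forall phi, Phi < phi -> B < TT al phi.
Proof.
  intros Hal. exists (Rpower (Rabs B + 1) al). split. apply Rpower_pos.
  intros phi Hphi. assert (0 < Rabs B + 1) by (pose proof (Rabs_pos B); lra).
  apply Rlt_le_trans with (Rabs B + 1). pose proof (Rle_abs B); lra.
  rewrite <- (Rpower_inv_r (Rabs B + 1) al) by auto. unfold TT.
  apply Rlt_le, Rlt_Rpower_l. apply Rdiv_lt_0_compat; lra. split; auto. apply Rpower_pos.
Qed.

Lemma Rpower_cT al c phi : 0 < c -> 0 < phi -> 0 < al ->
  Rpower (c * TT al phi) al = Rpower c al * phi.
Proof.
  intros. rewrite <- Rpower_mult_distr; auto. rewrite TT_pow; auto. apply TT_pos.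
Qed.

Lemma upper_g g al c : admissible_g g -> 0 < al ->
  is_lim_seq (fun k => g k / Rpower (INR k) al) 1 -> 1 < c ->
  exists r, 0 < r < 1 /\ exists Phi, 0 < Phi /\ forall phi, Phi < phi ->
    forall m, c * TT al phi <= INR m -> phi <= r * g m.
Proof.
  intros Hg Hal Hl Hc.
  set (C := Rpower c al).
  assert (HC : 1 < C).
  { unfold C. rewrite <- (Rpower_O c) by lra. apply Rpower_lt; lra. }
  set (eps := (C - 1) / (2 * C)).
  assert (Heps : 0 < eps) by (unfold eps; apply Rdiv_lt_0_compat; lra).
  exists (2 / (C + 1)). split. split. apply Rdiv_lt_0_compat; lra.
  apply Rmult_lt_reg_r with (C + 1). lra. unfold Rdiv. rewrite Rmult_assoc, Rinv_l by lra. lra.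
  apply is_lim_seq_spec in Hl. destruct (Hl (mkposreal eps Heps)) as [N HN]. simpl in HN.
  destruct (TT_large al (INR N) Hal) as [Phi [HPhi HT]].
  exists Phi. split; auto. intros phi Hphi m Hm.
  assert (Hp : 0 < phi) by lra.
  specialize (HT phi Hphi).
  assert (HTp := TT_pos al phi).
  assert (Hmn : INR N < INR m) by nra.
  apply INR_lt in Hmn.
  specialize (HN m ltac:(lia)).
  assert (Hm0 : 0 < INR m) by (apply lt_0_INR; lia).
  assert (Hpm := Rpower_pos (INR m) al).
  assert (H1 : (1 - eps) * Rpower (INR m) al < g m).
  { assert (Hq : 1 - eps < g m / Rpower (INR m) al) by (apply Rabs_lt_between in HN; lra).
    replace (g m) with (g m / Rpower (INR m) al * Rpower (INR m) al) by (field; lra). nra. }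
  assert (H2 : C * phi <= Rpower (INR m) al).
  { unfold C. rewrite <- Rpower_cT by lra. apply Rle_Rpower_l; try lra. split; auto. nra. }
  assert (H3 : (1 - eps) * C = (C + 1) / 2) by (unfold eps; field; lra).
  assert (H4 : 0 < 1 - eps).
  { unfold eps. apply Rmult_lt_reg_r with (2 * C). lra. unfold Rdiv. rewrite Rmult_minus_distr_r, Rmult_assoc, Rinv_l by lra. lra. }
  assert (H5 : (C + 1) / 2 * phi <= g m).
  { rewrite <- H3. rewrite Rmult_assoc. apply Rle_trans with ((1 - eps) * Rpower (INR m) al); [|lra].
    apply Rmult_le_compat_l; lra. }
  apply Rmult_le_reg_l with ((C + 1) / 2). lra.
  replace ((C + 1) / 2 * (2 / (C + 1) * g m)) with (g m) by (field; lra). lra.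
Qed.

Lemma Rpower_one al : Rpower 1 al = 1.
Proof. unfold Rpower. rewrite ln_1, Rmult_0_r, exp_0. auto. Qed.

Lemma lower_g g al c : admissible_g g -> 0 < al ->
  is_lim_seq (fun k => g k / Rpower (INR k) al) 1 -> 0 < c < 1 ->
  exists rho, 0 < rho < 1 /\ exists Phi, 0 < Phi /\ forall phi, Phi < phi ->
    forall m, INR m <= c * TT al phi -> g m <= rho * phi.
Proof.
  intros Hg Hal Hl Hc.
  set (C := Rpower c al).
  assert (HC : C < 1).
  { unfold C. rewrite <- (Rpower_one al). apply Rlt_Rpower_l; lra. }
  assert (HC0 : 0 < C) by apply Rpower_pos.
  set (eps := (1 - C) / (2 * C)).
  assert (Heps : 0 < eps) by (unfold eps; apply Rdiv_lt_0_compat; lra).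
  assert (H3 : (1 + eps) * C = (C + 1) / 2) by (unfold eps; field; lra).
  exists ((C + 1) / 2). split. lra.
  apply is_lim_seq_spec in Hl. destruct (Hl (mkposreal eps Heps)) as [N HN]. simpl in HN.
  assert (HgN : 0 <= g N) by (destruct Hg; auto).
  exists (g N / ((C + 1) / 2) + 1). split.
  { assert (0 <= g N / ((C + 1) / 2)) by (apply Rmult_le_pos; auto; apply Rlt_le, Rinv_0_lt_compat; lra). lra. }
  intros phi Hphi m Hm.
  assert (Hp : 0 < phi).
  { assert (0 <= g N / ((C + 1) / 2)) by (apply Rmult_le_pos; auto; apply Rlt_le, Rinv_0_lt_compat; lra). lra. }
  destruct (Compare_dec.le_lt_dec N m) as [HNm | HNm].
  - destruct m as [|m].
    + destruct Hg as [_ [H1 _]]. replace (g 0%nat) with 0 by (symmetry; apply H1; auto). nra.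
    + specialize (HN (S m) HNm).
      assert (Hm0 : 0 < INR (S m)) by (apply lt_0_INR; lia).
      assert (Hpm := Rpower_pos (INR (S m)) al).
      assert (H1 : g (S m) < (1 + eps) * Rpower (INR (S m)) al).
      { assert (Hq : g (S m) / Rpower (INR (S m)) al < 1 + eps) by (apply Rabs_lt_between in HN; lra).
        replace (g (S m)) with (g (S m) / Rpower (INR (S m)) al * Rpower (INR (S m)) al) by (field; lra). nra. }
      assert (H2 : Rpower (INR (S m)) al <= C * phi).
      { unfold C. rewrite <- Rpower_cT by lra. apply Rle_Rpower_l; try lra. }
      rewrite <- H3. rewrite Rmult_assoc. apply Rlt_le. eapply Rlt_le_trans. exact H1.
      apply Rmult_le_compat_l; lra.
  - assert (g m <= g N) by (apply g_mono; auto; lia).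
    assert (g N <= (C + 1) / 2 * phi).
    { assert (g N / ((C + 1) / 2) < phi) by lra.
      apply Rmult_lt_compat_l with (r := (C+1)/2) in H0; [|lra].
      replace ((C + 1) / 2 * (g N / ((C + 1) / 2))) with (g N) in H0 by (field; lra). lra. }
    lra.
Qed.

Lemma pow_le_dec r a b : 0 <= r <= 1 -> (a <= b)%nat -> r ^ b <= r ^ a.
Proof.
  intros Hr Hab. replace b with (a + (b - a))%nat by lia. rewrite pow_add.
  assert (0 <= r ^ a) by (apply pow_le; lra).
  assert (r ^ (b - a) <= 1) by (rewrite <- (pow1 (b - a)); apply pow_incr; lra).
  assert (0 <= r ^ (b - a)) by (apply pow_le; lra). nra.
Qed.

Lemma ex_aa g al phi : admissible_g g -> 0 < al ->
  is_lim_seq (fun k => g k / Rpower (INR k) al) 1 -> 0 < phi -> ex_series (aa g phi).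
Proof.
  intros. eapply ex_series_ext. 2: apply (ex_series_moment g al phi 0); auto.
  intros; simpl; ring.
Qed.

Lemma geom_series_ex r n : 0 < r < 1 -> ex_series (fun j => (INR j + 1) ^ n * r ^ j).
Proof.
  intros Hr. apply ex_series_ratio with r. lra. intros; apply pow_lt; lra.
  eapply is_lim_seq_ext. 2: apply is_lim_seq_const. intros k; simpl. field.
  apply pow_nonzero; lra.
Qed.

Lemma small_geom r eta : 0 <= r < 1 -> 0 < eta -> exists J, r ^ J < eta.
Proof.
  intros Hr He. assert (H := is_lim_seq_geom r ltac:(rewrite Rabs_pos_eq; lra)).
  apply is_lim_seq_spec in H. destruct (H (mkposreal eta He)) as [J HJ].
  exists J. specialize (HJ J (le_n J)). simpl in HJ. rewrite Rminus_0_r in HJ.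
  apply Rabs_lt_between in HJ. lra.
Qed.

Lemma moment_upper g al n d eta : admissible_g g -> 0 < al ->
  is_lim_seq (fun k => g k / Rpower (INR k) al) 1 -> 0 < d < 1 -> 0 < eta ->
  exists Phi, 0 < Phi /\ forall phi, Phi < phi ->
    Series (fun k => INR k ^ n * aa g phi k) <=
    Series (aa g phi) * (((1 + d) * TT al phi) ^ n + eta * TT al phi ^ n).
Proof.
  intros Hg Hal Hl Hd Heta.
  destruct (upper_g g al (1 + d/2) Hg Hal Hl ltac:(lra)) as [r [Hr [Phi1 [HPhi1 H1]]]].
  set (Cr := Series (fun j => (INR j + 1) ^ n * r ^ j)).
  assert (HCr : 0 <= Cr).
  { apply Series_nonneg. intros; apply Rmult_le_pos; apply pow_le; [pose proof (pos_INR n0)|]; lra.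
    apply geom_series_ex; auto. }
  destruct (small_geom r (eta / (4 ^ n * Cr + 1)) ltac:(lra)) as [J HJ].
  { apply Rdiv_lt_0_compat; auto. assert (0 <= 4 ^ n) by (apply pow_le; lra). nra. }
  assert (HJ' : r ^ J * (4 ^ n * Cr) <= eta).
  { assert (0 <= 4 ^ n) by (apply pow_le; lra).
    assert (0 < 4 ^ n * Cr + 1) by nra.
    apply Rmult_lt_compat_r with (r := 4 ^ n * Cr + 1) in HJ; auto.
    replace (eta / (4 ^ n * Cr + 1) * (4 ^ n * Cr + 1)) with eta in HJ by (field; lra).
    assert (0 <= r ^ J) by (apply pow_le; lra). nra. }
  destruct (TT_large al 1 Hal) as [Phi2 [HPhi2 H2]].
  destruct (TT_large al (2 * INR J / d) Hal) as [Phi3 [HPhi3 H3]].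
  exists (Rmax Phi1 (Rmax Phi2 Phi3)). split.
  { apply Rlt_le_trans with Phi1; auto. apply Rmax_l. }
  intros phi Hphi.
  apply Rmax_Rlt in Hphi. destruct Hphi as [Hp1 Hphi]. apply Rmax_Rlt in Hphi. destruct Hphi as [Hp2 Hp3].
  assert (Hp : 0 < phi) by lra.
  specialize (H1 phi Hp1). specialize (H2 phi Hp2). specialize (H3 phi Hp3).
  set (T := TT al phi) in *.
  assert (HT : 0 < T) by apply TT_pos.
  assert (HJT : INR J < d / 2 * T).
  { apply Rmult_lt_compat_l with (r := d/2) in H3; [|lra].
    replace (d / 2 * (2 * INR J / d)) with (INR J) in H3 by (field; lra). lra. }
  destruct (nfloor_ex ((1 + d/2) * T)) as [m Hm]. nra.
  destruct (nfloor_ex ((1 + d) * T)) as [K HK]. nra.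
  assert (HmK : (m <= K)%nat). { apply INR_le. assert (INR m < INR K + 1) by nra. 
    destruct (Rle_or_lt (INR m) (INR K)); auto. exfalso. 
    assert (K < m)%nat by (apply INR_lt; auto). assert (HS : (S K <= m)%nat) by lia. apply le_INR in HS. rewrite S_INR in HS. lra. }
  assert (Hgm : phi <= r * g (S m)). { apply H1. rewrite S_INR. lra. }
  assert (He : exists e, S K = (m + e)%nat /\ (J <= e)%nat).
  { exists (S K - m)%nat. split. lia.
    assert (INR m + INR J < INR (S K)) by (rewrite S_INR; nra).
    rewrite <- plus_INR in H. apply INR_lt in H. lia. }
  destruct He as [e [HKe HJe]].
  set (Z := Series (aa g phi)).
  assert (Hex := ex_aa g al phi Hg Hal Hl Hp).
  assert (Hexn := ex_series_moment g al phi n Hg Hal Hl Hp).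
  assert (Haam : aa g phi m <= Z) by (apply term_le_Series; auto; intros; apply aa_nonneg; auto; lra).
  rewrite (Series_incr_n _ (S K)) by (auto; lia). simpl pred.
  assert (Hfirst : sum_f_R0 (fun k => INR k ^ n * aa g phi k) K <= ((1 + d) * T) ^ n * Z).
  { apply Rle_trans with (sum_f_R0 (fun k => aa g phi k * ((1 + d) * T) ^ n) K).
    - apply sum_Rle. intros k Hk. rewrite Rmult_comm. apply Rmult_le_compat_l.
      apply aa_nonneg; auto; lra. apply pow_incr. split. apply pos_INR.
      apply le_INR in Hk. lra.
    - rewrite <- scal_sum. apply Rmult_le_compat_l. apply pow_le; nra.
      unfold Z. apply partial_le_Series; auto. intros; apply aa_nonneg; auto; lra. }
  assert (Hsecond : Series (fun k => INR (S K + k) ^ n * aa g phi (S K + k)) <=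
                    Z * r ^ e * (4 * T) ^ n * Cr).
  { unfold Cr. rewrite <- Series_scal_l.
    apply Series_le.
    2: { apply (ex_series_scal_l (K := R_AbsRing) (V := R_NormedModule)). apply geom_series_ex; auto. }
    intros j. split.
    - apply Rmult_le_pos. apply pow_le, pos_INR. apply aa_nonneg; auto; lra.
    - rewrite HKe, <- Nat.add_assoc.
      assert (Hg1 := geom_up g phi m r Hg Hp ltac:(lra) Hgm (e + j)).
      rewrite pow_add in Hg1.
      assert (Hle : INR (m + e + j) <= 4 * T * (INR j + 1)).
      { rewrite <- HKe. rewrite plus_INR, S_INR. assert (0 <= INR j) by apply pos_INR. nra. }
      assert (Hpw : INR (m + e + j) ^ n <= (4 * T) ^ n * (INR j + 1) ^ n).
      { rewrite <- Rpow_mult_distr. apply pow_incr. split. apply pos_INR. auto. }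
      rewrite Nat.add_assoc.
      assert (0 <= aa g phi (m + (e + j))) by (apply aa_nonneg; auto; lra).
      assert (0 <= INR (m + e + j) ^ n) by (apply pow_le, pos_INR).
      assert (0 <= r ^ e) by (apply pow_le; lra).
      assert (0 <= r ^ j) by (apply pow_le; lra).
      assert (0 <= (4 * T) ^ n) by (apply pow_le; lra).
      assert (0 <= (INR j + 1) ^ n) by (apply pow_le; pose proof (pos_INR j); lra).
      rewrite Nat.add_assoc in Hg1, H.
      apply Rle_trans with (((4 * T) ^ n * (INR j + 1) ^ n) * (aa g phi m * (r ^ e * r ^ j))).
      + apply Rmult_le_compat; auto.
      + assert (aa g phi m * (r ^ e * r ^ j) <= Z * (r ^ e * r ^ j)).
        { apply Rmult_le_compat_r; auto. apply Rmult_le_pos; auto. }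
        replace (Z * r ^ e * (4 * T) ^ n * ((INR j + 1) ^ n * r ^ j)) with
          (((4 * T) ^ n * (INR j + 1) ^ n) * (Z * (r ^ e * r ^ j))) by ring.
        apply Rmult_le_compat_l; auto. apply Rmult_le_pos; auto. }
  assert (Hre : r ^ e <= r ^ J) by (apply pow_le_dec; auto; lra).
  assert (HZ : 0 <= Z) by (unfold Z; apply Series_nonneg; auto; intros; apply aa_nonneg; auto; lra).
  assert (Z * r ^ e * (4 * T) ^ n * Cr <= Z * (eta * T ^ n)).
  { rewrite Rpow_mult_distr.
    replace (Z * r ^ e * (4 ^ n * T ^ n) * Cr) with (Z * T ^ n * (r ^ e * (4 ^ n * Cr))) by ring.
    replace (Z * (eta * T ^ n)) with (Z * T ^ n * eta) by ring.
    apply Rmult_le_compat_l. apply Rmult_le_pos; auto. apply pow_le; lra.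
    eapply Rle_trans; [|exact HJ']. apply Rmult_le_compat_r; auto.
    apply Rmult_le_pos; auto. apply pow_le; lra. }
  lra.
Qed.

Lemma moment_lower g al n d eta : admissible_g g -> 0 < al ->
  is_lim_seq (fun k => g k / Rpower (INR k) al) 1 -> 0 < d < 1 -> 0 < eta ->
  exists Phi, 0 < Phi /\ forall phi, Phi < phi ->
    Series (aa g phi) * ((1 - d) * TT al phi) ^ n * (1 - eta) <=
    Series (fun k => INR k ^ n * aa g phi k).
Proof.
  intros Hg Hal Hl Hd Heta.
  destruct (lower_g g al (1 - d/2) Hg Hal Hl ltac:(lra)) as [rho [Hr [Phi1 [HPhi1 H1]]]].
  destruct (small_geom rho (eta * (1 - rho)) ltac:(lra)) as [J HJ]. nra.
  destruct (TT_large al (2 * (INR J + 2) / d) Hal) as [Phi2 [HPhi2 H2]].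
  exists (Rmax Phi1 Phi2). split.
  { apply Rlt_le_trans with Phi1; auto. apply Rmax_l. }
  intros phi Hphi.
  apply Rmax_Rlt in Hphi. destruct Hphi as [Hp1 Hp2].
  assert (Hp : 0 < phi) by lra.
  specialize (H1 phi Hp1). specialize (H2 phi Hp2).
  set (T := TT al phi) in *.
  assert (HT : 0 < T) by apply TT_pos.
  assert (HJT : INR J + 2 < d / 2 * T).
  { apply Rmult_lt_compat_l with (r := d/2) in H2; [|lra].
    replace (d / 2 * (2 * (INR J + 2) / d)) with (INR J + 2) in H2 by (field; lra). lra. }
  destruct (nfloor_ex ((1 - d) * T)) as [L HL]. nra.
  destruct (nfloor_ex ((1 - d/2) * T)) as [m HM]. nra.
  assert (Hdd : exists dd, m = (L + S dd)%nat /\ (J <= S dd)%nat).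
  { assert (INR L + INR J + 1 < INR m) by nra.
    rewrite <- plus_INR in H. 
    assert (INR (L + J + 1) < INR m) by (rewrite plus_INR; simpl; lra).
    apply INR_lt in H0. exists (m - L - 1)%nat. lia. }
  destruct Hdd as [dd [Hm HJd]].
  assert (Hgm : g m <= rho * phi) by (apply H1; lra).
  set (Z := Series (aa g phi)).
  assert (Hex := ex_aa g al phi Hg Hal Hl Hp).
  assert (Hexn := ex_series_moment g al phi n Hg Hal Hl Hp).
  assert (Hnn : forall k, 0 <= aa g phi k) by (intros; apply aa_nonneg; auto; lra).
  assert (Haam : aa g phi m <= Z) by (apply term_le_Series; auto).
  assert (HZ : 0 <= Z) by (unfold Z; apply Series_nonneg; auto).
  assert (Hsum : sum_f_R0 (aa g phi) L <= Z * eta).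
  { rewrite Hm in Hgm, Haam. eapply Rle_trans. apply lower_sum; eauto.
    assert (rho ^ S dd <= rho ^ J) by (apply pow_le_dec; auto; lra).
    assert (0 <= rho ^ S dd) by (apply pow_le; lra).
    assert (0 <= aa g phi (L + S dd)) by auto.
    assert (rho ^ S dd < eta * (1 - rho)) by lra.
    apply Rmult_le_reg_r with (1 - rho). lra.
    unfold Rdiv. rewrite Rmult_assoc, Rinv_l, Rmult_1_r by lra.
    rewrite Rmult_assoc. apply Rmult_le_compat; auto; lra. }
  assert (HZs : Z = sum_f_R0 (aa g phi) L + Series (fun k => aa g phi (S L + k))).
  { unfold Z. rewrite (Series_incr_n _ (S L)) by (auto; lia). auto. }
  rewrite (Series_incr_n _ (S L)) by (auto; lia). simpl pred.
  assert (H0 : 0 <= sum_f_R0 (fun k => INR k ^ n * aa g phi k) L).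
  { apply cond_pos_sum. intros; apply Rmult_le_pos; auto. apply pow_le, pos_INR. }
  assert (Htail : ((1 - d) * T) ^ n * Series (fun k => aa g phi (S L + k)) <=
                  Series (fun k => INR (S L + k) ^ n * aa g phi (S L + k))).
  { rewrite <- Series_scal_l. apply Series_le.
    2: { apply (proj1 (ex_series_incr_n (K := R_AbsRing) (V := R_NormedModule) (fun k => INR k ^ n * aa g phi k) (S L))). exact Hexn. }
    intros k. split. apply Rmult_le_pos; auto. apply pow_le; nra.
    apply Rmult_le_compat_r; auto. apply pow_incr. split. nra.
    rewrite plus_INR, S_INR. pose proof (pos_INR k). lra. }
  assert (Hpw : 0 <= ((1 - d) * T) ^ n) by (apply pow_le; nra).
  assert (((1 - d) * T) ^ n * (Z - Z * eta) <= ((1 - d) * T) ^ n * Series (fun k => aa g phi (S L + k))).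
  { apply Rmult_le_compat_l; auto. lra. }
  replace (Z * ((1 - d) * T) ^ n * (1 - eta)) with (((1 - d) * T) ^ n * (Z - Z * eta)) by ring.
  lra.
Qed.

Lemma lim_pow u (l : R) n : is_lim_seq u l -> is_lim_seq (fun k => u k ^ n) (l ^ n).
Proof.
  intros H. induction n; simpl. apply is_lim_seq_const.
  exact (is_lim_seq_mult' _ _ _ _ H IHn).
Qed.

Lemma pow_close n eps : 0 < eps -> exists d, 0 < d < 1 /\ (1 + d) ^ n < 1 + eps /\ 1 - eps < (1 - d) ^ n.
Proof.
  intros He.
  assert (Hd : is_lim_seq (fun k => / (INR k + 1) / 2) 0).
  { assert (H := is_lim_seq_scal_r _ (/2) _ inv_n_lim). simpl in H. rewrite Rmult_0_l in H. exact H. }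
  assert (Hp := lim_pow _ _ n (is_lim_seq_plus' _ _ _ _ (is_lim_seq_const 1) Hd)).
  assert (Hm := lim_pow _ _ n (is_lim_seq_minus' _ _ _ _ (is_lim_seq_const 1) Hd)).
  rewrite Rplus_0_r, pow1 in Hp. rewrite Rminus_0_r, pow1 in Hm.
  apply is_lim_seq_spec in Hp. apply is_lim_seq_spec in Hm.
  destruct (Hp (mkposreal eps He)) as [N1 HN1]. destruct (Hm (mkposreal eps He)) as [N2 HN2].
  simpl in *. set (k := Nat.max N1 N2).
  specialize (HN1 k ltac:(lia)). specialize (HN2 k ltac:(lia)).
  exists (/ (INR k + 1) / 2).
  assert (0 < / (INR k + 1)) by (apply Rinv_0_lt_compat; pose proof (pos_INR k); lra).
  assert (/ (INR k + 1) <= 1).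
  { rewrite <- Rinv_1. apply Rinv_le_contravar. lra. pose proof (pos_INR k); lra. }
  apply Rabs_lt_between in HN1. apply Rabs_lt_between in HN2.
  split; [lra|]. split; lra.
Qed.

Lemma Z_ge1 g al phi : admissible_g g -> 0 < al ->
  is_lim_seq (fun k => g k / Rpower (INR k) al) 1 -> 0 < phi -> 1 <= Zpart g phi.
Proof.
  intros. unfold Zpart. change (fun n => phi ^ n / gfact g n) with (aa g phi).
  replace 1 with (aa g phi 0) by (unfold aa; simpl; field).
  apply term_le_Series. intros; apply aa_nonneg; auto; lra. apply (ex_aa g al); auto.
Qed.

Lemma moment_eq g phi n : admissible_g g -> 0 < Zpart g phi ->
  moment g phi n = Series (fun k => INR k ^ n * aa g phi k) / Zpart g phi.
Proof.
  intros Hg HZ. unfold moment, Pphi. unfold Rdiv at 2. rewrite Rmult_comm, <- Series_scal_l.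
  apply Series_ext. intros k. unfold aa. assert (0 < gfact g k) by (apply gfact_pos; auto).
  field. split; lra.
Qed.

Lemma TT_n al phi n : 0 < phi -> 0 < al -> Rpower phi (INR n / al) = TT al phi ^ n.
Proof.
  intros. unfold TT. rewrite <- Rpower_pow by apply Rpower_pos. rewrite Rpower_mult.
  f_equal. field. lra.
Qed.

Lemma moment_lim g al n : admissible_g g -> 0 < al ->
  is_lim_seq (fun k => g k / Rpower (INR k) al) 1 ->
  is_lim (fun phi => moment g phi n / Rpower phi (INR n / al)) p_infty 1.
Proof.
  intros Hg Hal Hl. apply is_lim_spec. intros eps. simpl.
  set (e := Rmin eps 1 / 4).
  assert (He : 0 < e). { unfold e. apply Rmin_case; destruct eps; simpl; lra. }
  assert (He1 : e <= 1/4) by (unfold e; pose proof (Rmin_r eps 1); lra).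
  assert (He2 : 4 * e <= eps) by (unfold e; pose proof (Rmin_l eps 1); lra).
  destruct (pow_close n e He) as [d [Hd [Hup Hlo]]].
  destruct (moment_upper g al n d e Hg Hal Hl Hd He) as [Phi1 [HP1 H1]].
  destruct (moment_lower g al n d e Hg Hal Hl Hd He) as [Phi2 [HP2 H2]].
  exists (Rmax Phi1 Phi2). intros phi Hphi.
  apply Rmax_Rlt in Hphi. destruct Hphi as [Hp1 Hp2].
  assert (Hp : 0 < phi) by lra.
  specialize (H1 phi Hp1). specialize (H2 phi Hp2).
  assert (HZ := Z_ge1 g al phi Hg Hal Hl Hp).
  replace (Series (aa g phi)) with (Zpart g phi) in H1, H2 by reflexivity.
  rewrite moment_eq by (auto; lra). rewrite TT_n by auto.
  set (T := TT al phi) in *. set (Z := Zpart g phi) in *.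
  set (S := Series (fun k => INR k ^ n * aa g phi k)) in *.
  assert (HT : 0 < T ^ n) by (apply pow_lt, TT_pos).
  rewrite !Rpow_mult_distr in H1, H2.
  assert (HZT : 0 < Z * T ^ n) by (apply Rmult_lt_0_compat; lra).
  replace (S / Z / T ^ n) with (S / (Z * T ^ n)) by (field; lra).
  assert (Hq1 : S / (Z * T ^ n) <= (1 + d) ^ n + e).
  { apply Rmult_le_reg_r with (Z * T ^ n); auto.
    replace (S / (Z * T ^ n) * (Z * T ^ n)) with S by (field; lra). lra. }
  assert (Hq2 : (1 - d) ^ n * (1 - e) <= S / (Z * T ^ n)).
  { apply Rmult_le_reg_r with (Z * T ^ n); auto.
    replace (S / (Z * T ^ n) * (Z * T ^ n)) with S by (field; lra). lra. }
  assert ((1 - e) * (1 - e) <= (1 - d) ^ n * (1 - e)) by (apply Rmult_le_compat_r; lra).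
  apply Rabs_lt_between. split; nra.
Qed.

Lemma der_lin f h x df dh k : is_derive f x df -> is_derive h x dh ->
  is_derive (fun t => f t - k * h t) x (df - k * dh).
Proof.
  intros H1 H2. apply is_derive_Reals in H1. apply is_derive_Reals in H2.
  apply is_derive_Reals.
  apply (derivable_pt_lim_minus f (fun t => k * h t)); auto.
  apply (derivable_pt_lim_scal h k); auto.
Qed.

Lemma mvt_mono (D dD : R -> R) a b : a < b -> (forall x, a <= x <= b -> is_derive D x (dD x)) ->
  exists c, a <= c <= b /\ D b - D a = dD c * (b - a).
Proof.
  intros Hab HD.
  destruct (MVT_gen D a b dD) as [c [Hc Heq]].
  - intros x Hx. rewrite Rmin_left, Rmax_right in Hx by lra. apply HD; lra.
  - intros x Hx. rewrite Rmin_left, Rmax_right in Hx by lra.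
    apply continuity_pt_filterlim. apply (ex_derive_continuous (K := R_AbsRing) (V := R_NormedModule)). exists (dD x). apply HD; lra.
  - rewrite Rmin_left, Rmax_right in Hc by lra. exists c; split; auto.
Qed.

Lemma lhopital f h f' h' : 
  (exists x0, forall x, x0 < x -> is_derive f x (f' x) /\ is_derive h x (h' x) /\ 0 < h' x) ->
  is_lim h p_infty p_infty -> is_lim (fun x => f' x / h' x) p_infty 1 ->
  is_lim (fun x => f x / h x) p_infty 1.
Proof.
  intros [x0 Hd] Hh Hr.
  apply is_lim_spec in Hh. apply is_lim_spec in Hr. apply is_lim_spec.
  intros eps. simpl.
  set (et := Rmin eps 1 / 3).
  assert (Het : 0 < et). { unfold et. apply Rmin_case; destruct eps; simpl; lra. }
  assert (Het1 : et <= 1/3) by (unfold et; pose proof (Rmin_r eps 1); lra).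
  assert (Het2 : 3 * et <= eps) by (unfold et; pose proof (Rmin_l eps 1); lra).
  destruct (Hr (mkposreal et Het)) as [M1 HM1]. simpl in HM1.
  set (x1 := Rmax x0 M1 + 1).
  assert (Hx1 : x0 < x1 /\ M1 < x1) by (unfold x1; split; [pose proof (Rmax_l x0 M1) | pose proof (Rmax_r x0 M1)]; lra).
  set (A := Rabs (f x1) + 2 * Rabs (h x1)).
  destruct (Hh (Rmax 1 (A / et))) as [M2 HM2].
  exists (Rmax x1 M2). intros x Hx. apply Rmax_Rlt in Hx. destruct Hx as [Hx Hx2].
  specialize (HM2 x Hx2). apply Rmax_Rlt in HM2. destruct HM2 as [Hh1 Hh2].
  assert (Hbd : forall t, x1 <= t -> (1 - et) * h' t < f' t < (1 + et) * h' t).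
  { intros t Ht. destruct (Hd t ltac:(lra)) as [_ [_ Hp]].
    specialize (HM1 t ltac:(lra)). apply Rabs_lt_between in HM1.
    assert (Hq : 1 - et < f' t / h' t < 1 + et) by lra.
    replace (f' t) with (f' t / h' t * h' t) by (field; lra). split; nra. }
  destruct (mvt_mono (fun t => f t - (1 + et) * h t) (fun t => f' t - (1 + et) * h' t) x1 x Hx)
    as [c1 [Hc1 E1]].
  { intros t Ht. destruct (Hd t ltac:(lra)) as [Hf [Hg _]]. apply der_lin; auto. }
  destruct (mvt_mono (fun t => f t - (1 - et) * h t) (fun t => f' t - (1 - et) * h' t) x1 x Hx)
    as [c2 [Hc2 E2]].
  { intros t Ht. destruct (Hd t ltac:(lra)) as [Hf [Hg _]]. apply der_lin; auto. }
  specialize (Hbd c1 ltac:(lra)) as B1. specialize (Hbd c2 ltac:(lra)) as B2.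
  assert (U : f x - (1 + et) * h x - (f x1 - (1 + et) * h x1) <= 0).
  { rewrite E1. assert (f' c1 - (1 + et) * h' c1 < 0) by lra. nra. }
  assert (L : 0 <= f x - (1 - et) * h x - (f x1 - (1 - et) * h x1)).
  { rewrite E2. assert (0 < f' c2 - (1 - et) * h' c2) by lra. nra. }
  assert (HA1 : Rabs (f x1 - (1 + et) * h x1) <= A).
  { unfold A. eapply Rle_trans. apply Rabs_triang. rewrite Rabs_Ropp, Rabs_mult.
    rewrite (Rabs_pos_eq (1 + et)) by lra. pose proof (Rabs_pos (h x1)). nra. }
  assert (HA2 : Rabs (f x1 - (1 - et) * h x1) <= A).
  { unfold A. eapply Rle_trans. apply Rabs_triang. rewrite Rabs_Ropp, Rabs_mult.
    rewrite (Rabs_pos_eq (1 - et)) by lra. pose proof (Rabs_pos (h x1)). nra. }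
  apply Rabs_le_between in HA1. apply Rabs_le_between in HA2.
  assert (Hhx : 0 < h x) by lra.
  assert (HAh : A < et * h x).
  { apply Rmult_lt_compat_l with (r := et) in Hh2; auto.
    replace (et * (A / et)) with A in Hh2 by (field; lra). lra. }
  apply Rabs_lt_between. split.
  - apply Rmult_lt_reg_r with (h x); auto.
    replace ((f x / h x - 1) * h x) with (f x - h x) by (field; lra). nra.
  - apply Rmult_lt_reg_r with (h x); auto.
    replace ((f x / h x - 1) * h x) with (f x - h x) by (field; lra). nra.
Qed.

Lemma CV_inf g al : admissible_g g -> 0 < al ->
  is_lim_seq (fun k => g k / Rpower (INR k) al) 1 ->
  CV_radius (fun n => / gfact g n) = p_infty.
Proof.
  intros Hg Hal Hl. apply CV_radius_infinite_DAlembert.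
  - intros n. apply Rgt_not_eq, Rinv_0_lt_compat, gfact_pos; auto.
  - eapply is_lim_seq_ext.
    2: { assert (H := g_infty g al Hal Hl). apply is_lim_seq_incr_1 in H.
         apply is_lim_seq_inv in H. 2: discriminate. simpl in H. exact H. }
    intros k. simpl. assert (0 < gfact g k) by (apply gfact_pos; auto).
    assert (0 < g (S k)) by (apply g_pos; auto).
    rewrite Rabs_pos_eq.
    + field. lra.
    + apply Rlt_le. apply Rdiv_lt_0_compat; apply Rinv_0_lt_compat; nra.
Qed.

Lemma Z_eq_PS g x : Zpart g x = PSeries (fun n => / gfact g n) x.
Proof. unfold Zpart, PSeries. apply Series_ext. intros; unfold Rdiv; ring. Qed.

Lemma Z_deriv g al phi : admissible_g g -> 0 < al ->
  is_lim_seq (fun k => g k / Rpower (INR k) al) 1 -> 0 < phi ->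
  is_derive (Zpart g) phi (Series (fun k => INR k ^ 1 * aa g phi k) / phi).
Proof.
  intros Hg Hal Hl Hp.
  assert (HS : Series (fun k => INR k ^ 1 * aa g phi k) =
               phi * PSeries (PS_derive (fun n => / gfact g n)) phi).
  { rewrite Series_incr_1 by (apply (ex_series_moment g al); auto).
    simpl INR at 1. rewrite pow_i by lia. rewrite Rmult_0_l, Rplus_0_l.
    unfold PSeries. rewrite <- Series_scal_l. apply Series_ext. intros k.
    unfold PS_derive, aa. simpl. assert (0 < gfact g k) by (apply gfact_pos; auto).
    assert (0 < g (S k)) by (apply g_pos; auto). field. repeat split; lra. }
  rewrite HS. replace (phi * PSeries (PS_derive (fun n => / gfact g n)) phi / phi)
    with (PSeries (PS_derive (fun n => / gfact g n)) phi) by (field; lra).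
  eapply is_derive_ext. intros t. symmetry. apply Z_eq_PS.
  apply is_derive_PSeries. rewrite (CV_inf g al); auto. simpl. auto.
Qed.

Lemma F_deriv g al phi : admissible_g g -> 0 < al ->
  is_lim_seq (fun k => g k / Rpower (INR k) al) 1 -> 0 < phi ->
  is_derive (fun x => ln (Zpart g x)) phi (moment g phi 1 / phi).
Proof.
  intros Hg Hal Hl Hp.
  assert (HZ := Z_ge1 g al phi Hg Hal Hl Hp).
  assert (H := is_derive_comp ln (Zpart g) phi _ _ (is_derive_ln (Zpart g phi) ltac:(lra))
                 (Z_deriv g al phi Hg Hal Hl Hp)).
  rewrite moment_eq by (auto; lra).
  assert (Hs : forall a b : R, scal a b = a * b) by reflexivity.
  rewrite Hs in H.
  replace (Series (fun k => INR k ^ 1 * aa g phi k) / Zpart g phi / phi) with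
    (Series (fun k => INR k ^ 1 * aa g phi k) / phi * / Zpart g phi) by (field; lra).
  exact H.
Qed.

Lemma H_deriv al phi : 0 < al -> 0 < phi ->
  is_derive (fun x => al * Rpower x (1 / al)) phi (Rpower phi (1 / al - 1)).
Proof.
  intros Hal Hp.
  assert (H := derivable_pt_lim_power phi (1 / al) Hp).
  apply is_derive_Reals in H. apply (is_derive_scal _ _ al) in H.
  replace (Rpower phi (1 / al - 1)) with (al * (1 / al * Rpower phi (1 / al - 1))) by (field; lra).
  exact H.
Qed.

Lemma h_infty al : 0 < al -> is_lim (fun x => al * Rpower x (1 / al)) p_infty p_infty.
Proof.
  intros Hal. apply is_lim_spec. intros M. simpl.
  destruct (TT_large al (M / al) Hal) as [Phi [_ H]]. exists Phi. intros x Hx.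
  specialize (H x Hx). unfold TT in H.
  apply Rmult_lt_compat_l with (r := al) in H; auto.
  replace (al * (M / al)) with M in H by (field; lra). exact H.
Qed.

Lemma lnZ_lim g al : admissible_g g -> 0 < al ->
  is_lim_seq (fun k => g k / Rpower (INR k) al) 1 ->
  is_lim (fun phi => ln (Zpart g phi) / (al * Rpower phi (1 / al))) p_infty 1.
Proof.
  intros Hg Hal Hl.
  apply (lhopital (fun phi => ln (Zpart g phi)) (fun x => al * Rpower x (1 / al))
           (fun phi => moment g phi 1 / phi) (fun phi => Rpower phi (1 / al - 1))).
  - exists 0. intros x Hx. split. apply (F_deriv g al); auto. split. apply H_deriv; auto. apply Rpower_pos.
  - apply h_infty; auto.
  - eapply is_lim_ext_loc. 2: apply (moment_lim g al 1); auto.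
    simpl. exists 0. intros x Hx.
    unfold Rminus. rewrite Rpower_plus, Rpower_Ropp, Rpower_1 by auto.
    replace (1 / al) with (1 / al) by reflexivity.
    assert (0 < Rpower x (1 / al)) by apply Rpower_pos.
    field. split; lra.
Qed.


Lemma var_lim g al : admissible_g g -> 0 < al ->
  is_lim_seq (fun k => g k / Rpower (INR k) al) 1 ->
  is_lim (fun phi => variance g phi / Rpower phi (2 / al)) p_infty 0.
Proof.
  intros Hg Hal Hl.
  assert (H1 := moment_lim g al 1 Hg Hal Hl).
  assert (H2 := moment_lim g al 2 Hg Hal Hl).
  assert (Hsq := is_lim_mult _ _ p_infty 1 1 H1 H1 ltac:(simpl; auto)).
  assert (Hd := is_lim_minus _ _ p_infty 1 (Rbar_mult 1 1) 0 H2 Hsq).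
  eapply is_lim_ext_loc. 2: apply Hd.
  - simpl. exists 0. intros x Hx. unfold variance.
    assert (0 < TT al x) by apply TT_pos.
    change (Rpower x (1/al)) with (TT al x).
    replace (Rpower x ((1+1)/al)) with (TT al x ^ 2) by (rewrite <- TT_n by auto; simpl; reflexivity).
    replace (Rpower x (2/al)) with (TT al x ^ 2) by (rewrite <- TT_n by auto; replace (INR 2) with 2 by (simpl; ring); reflexivity).
    field. lra.
  - unfold is_Rbar_minus, is_Rbar_plus. simpl. replace (1 + - (1 * 1)) with 0 by ring. reflexivity.
Qed.

Theorem mainTheorem8 (g : nat -> R) (alpha : R) :
  admissible_g g ->
  0 < alpha <= 1 ->
  is_lim_seq (fun k => g k / Rpower (INR k) alpha) 1 ->
  (forall n : nat,
     is_lim (fun phi => moment g phi n / Rpower phi (INR n / alpha)) p_infty 1) /\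
  is_lim (fun phi => ln (Zpart g phi) / (alpha * Rpower phi (1 / alpha))) p_infty 1 /\
  is_lim (fun phi => variance g phi / Rpower phi (2 / alpha)) p_infty 0.
Proof.
  intros Hg [Hal _] Hl. split; [|split].
  - intros n. apply moment_lim; auto.
  - apply lnZ_lim; auto.
  - apply var_lim; auto.
Qed.
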